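(* Let $L\in\mathcal L(C_6)$ with $\{2,5\}\subset L$. Then $L=\{2,5\}$ or $L=\{2,4,5\}$, and both sets actually lie in $\mathcal L(C_6)$. In particular, $[2,5]\notin\mathcal L(C_6)$.
   Context: $C_n$ denotes a cyclic group of order $n$; $[a,b]=\{x\in\mathbb Z:a\le x\le b\}$. For a subset $G_0$ of a finite abelian group $G$, a sequence over $G_0$ is an element of the free abelian monoid $\mathcal F(G_0)$ with basis $G_0$ (a finite unordered list of elements of $G_0$, repetitions allowed). $\mathcal B(G_0)$ is the monoid of zero-sum sequences over $G_0$ (including the empty sequence). An atom is a minimal zero-sum sequence, i.e. a nonempty zero-sum sequence that is not a product of two nonempty zero-sum sequences. For $B\in\mathcal B(G_0)$, $\mathsf L(B)=\{k\in\mathbb N_0: B \text{ is a product of } k \text{ atoms}\}$, and $\mathcal L(G_0)=\{\mathsf L(B):B\in\mathcal B(G_0)\}$; $\mathcal L(G)$ is the case $G_0=G$. *)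

(* Defs.v *)
From mathcomp Require Import all_boot all_order all_algebra.
Set Implicit Arguments. Unset Strict Implicit. Unset Printing Implicit Defensive.
Import GRing.Theory.
Local Open Scope ring_scope.

(* Sequences over G (elements of the free abelian monoid F(G)) are modelled
   as lists, considered up to permutation (perm_eq); the monoid product is
   concatenation. *)
Section ZeroSum.
Variable G : zmodType.

Definition sigma (S : seq G) : G := \sum_(g <- S) g.

Definition zero_sum (S : seq G) : Prop := sigma S = 0.

Definition atom (S : seq G) : Prop :=
  S <> [::] /\ zero_sum S /\
  ~ (exists S1 S2 : seq G, S1 <> [::] /\ S2 <> [::] /\
       zero_sum S1 /\ zero_sum S2 /\ perm_eq S (S1 ++ S2)).

Definition in_lengths (B : seq G) (k : nat) : Prop :=
  exists As : seq (seq G),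
    size As = k /\ (forall A, A \in As -> atom A) /\ perm_eq B (flatten As).

Definition in_system_of_lengths (L : nat -> Prop) : Prop :=
  exists B : seq G, zero_sum B /\ forall k, L k <-> in_lengths B k.

End ZeroSum.

(* Main.v *)
Require Import Defs.
From mathcomp Require Import all_boot all_order all_algebra.
From mathcomp Require Import zify.
From Stdlib Require Import Classical.
Import GRing.Theory.

Set Implicit Arguments. Unset Strict Implicit. Unset Printing Implicit Defensive.

Definition cnt (s : seq 'Z_6) : seq nat :=
  [seq count (fun x : 'Z_6 => val x == i) s | i <- iota 0 6].

Lemma size_cnt s : size (cnt s) = 6.
Proof. by rewrite size_map size_iota. Qed.

Lemma nth_cnt s i : i < 6 -> nth 0 (cnt s) i = count (fun x : 'Z_6 => val x == i) s.
Proof. by move=> hi; rewrite (nth_map 0) ?size_iota // nth_iota. Qed.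

Lemma nth_cnt_ge s i : 6 <= i -> nth 0 (cnt s) i = 0.
Proof. by move=> h; rewrite nth_default ?size_cnt. Qed.

Lemma vec_eq (a b : seq nat) : size a = 6 -> size b = 6 ->
  (forall i, i < 6 -> nth 0 a i = nth 0 b i) -> a = b.
Proof.
move=> ha hb h; apply: (eq_from_nth (x0:=0)); first by rewrite ha hb.
by move=> i; rewrite ha; apply h.
Qed.

Lemma cnt_cat s t i : nth 0 (cnt (s ++ t)) i = nth 0 (cnt s) i + nth 0 (cnt t) i.
Proof.
case: (ltnP i 6) => hi; first by rewrite !nth_cnt // count_cat.
by rewrite !nth_cnt_ge.
Qed.

Lemma perm_cnt s t : perm_eq s t -> cnt s = cnt t.
Proof.
move/permP=> h; apply: vec_eq; rewrite ?size_cnt // => i hi.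
by rewrite !nth_cnt // h.
Qed.

Lemma cnt_perm s t : cnt s = cnt t -> perm_eq s t.
Proof.
move=> h; apply/allP => x _ /=.
have := f_equal (fun v => nth 0 v (val x)) h; rewrite !nth_cnt ?ltn_ord // => e.
rewrite (@eq_count _ _ (fun y : 'Z_6 => val y == val x)) //.
by rewrite (@eq_count _ (pred1 x) (fun y : 'Z_6 => val y == val x)) // e.
Qed.

Lemma cnt_cons x s i : nth 0 (cnt (x :: s)) i = (val x == i) + nth 0 (cnt s) i.
Proof.
case: (ltnP i 6) => hi; first by rewrite !nth_cnt.
rewrite !nth_cnt_ge //; case: eqP => // e; have hx : val x < 6 := ltn_ord x; lia.
Qed.

Definition wsum (c : seq nat) : nat := sumn [seq i * nth 0 c i | i <- iota 0 6].
Definition zs (c : seq nat) : bool := wsum c %% 6 == 0.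

Lemma sumn_mapD (I : Type) (f g : I -> nat) r :
  sumn [seq f i + g i | i <- r] = sumn (map f r) + sumn (map g r).
Proof. elim: r => //= a r ->; lia. Qed.

Lemma wsum_cnt s : wsum (cnt s) = sumn (map val s).
Proof.
elim: s => [|x s IH]; first by [].
rewrite /wsum.
transitivity (sumn [seq i * (val x == i) + i * nth 0 (cnt s) i | i <- iota 0 6]).
  by congr sumn; apply: eq_map => i; rewrite cnt_cons mulnDr.
rewrite sumn_mapD.
have -> : sumn [seq i * nth 0 (cnt s) i | i <- iota 0 6] = wsum (cnt s) by [].
rewrite IH /=; case: x => [[|[|[|[|[|[|?]]]]]] hx] //=.
Qed.

Lemma val_sigma (s : seq 'Z_6) : val (sigma s) = sumn (map val s) %% 6.
Proof.
elim: s => [|x s IH]; first by rewrite /sigma big_nil.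
rewrite /sigma big_cons -/(sigma s).
change (val (x + sigma s)%R) with ((val x + val (sigma s)) %% 6).
by rewrite IH /= modnDmr.
Qed.

Lemma zsP s : zero_sum s <-> zs (cnt s).
Proof.
rewrite /zero_sum /zs wsum_cnt -val_sigma; split => [->//|/eqP h].
exact: val_inj.
Qed.

Lemma mkseq6 (c : seq nat) : size c = 6 -> [seq nth 0 c i | i <- iota 0 6] = c.
Proof. by move=> h; rewrite -{2}(mkseq_nth 0 c) h. Qed.

Lemma sumn_cnt s : sumn (cnt s) = size s.
Proof.
elim: s => [|x s IH] //.
have -> : cnt (x :: s) = [seq (val x == i) + nth 0 (cnt s) i | i <- iota 0 6].
  apply: vec_eq; rewrite ?size_cnt ?size_map ?size_iota // => i hi.
rewrite sumn_mapD mkseq6 ?size_cnt // IH /=.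
case: x => [[|[|[|[|[|[|?]]]]]] hx] //=.
Qed.

Fixpoint subvecs (c : seq nat) : seq (seq nat) :=
  match c with
  | [::] => [:: [::]]
  | ci :: c' => [seq x :: t | x <- iota 0 ci.+1, t <- subvecs c']
  end.

Lemma mem_subvecs c d : (d \in subvecs c) = (size d == size c) && all2 leq d c.
Proof.
elim: c d => [|ci c IH] [|di d] //.
- by apply/allpairsP => -[[x t] [/= _ _]].
- rewrite [RHS]/= eqSS.
  apply/allpairsP/idP => [[[x t] [hx ht [-> ->]]]|/and3P[hs h1 hl]].
    move: hx ht; rewrite mem_iota IH add0n ltnS => hx /andP[h1 h2].
    move: hx => /andP[_ hx]; by apply/and3P.
  exists (di, d); split; [by rewrite mem_iota add0n ltnS | | by []].
  by change (d \in subvecs c); rewrite IH hs.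
Qed.

Lemma all2_nth (d c : seq nat) : all2 leq d c -> forall i, nth 0 d i <= nth 0 c i.
Proof.
elim: d c => [|x d IH] [|y c] //=.
- by move=> /andP[h1 h2] [|i] //=; apply: IH.
Qed.

Lemma nth_all2 (d c : seq nat) : size d = size c -> (forall i, nth 0 d i <= nth 0 c i) ->
  all2 leq d c.
Proof.
elim: d c => [|x d IH] [|y c] //= [hs] h.
by rewrite (h 0) /=; apply: IH => // i; apply: (h i.+1).
Qed.

Lemma mem_subvecs6 c d : size c = 6 -> size d = 6 ->
  (forall i, nth 0 d i <= nth 0 c i) -> d \in subvecs c.
Proof.
by move=> hc hd h; rewrite mem_subvecs hc hd eqxx /=; apply: nth_all2 => //; rewrite hc.
Qed.

Lemma subvecs_props c d : d \in subvecs c -> size d = size c /\ forall i, nth 0 d i <= nth 0 c i.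
Proof. by rewrite mem_subvecs => /andP[/eqP -> /all2_nth]. Qed.

Definition atomv (c : seq nat) : bool :=
  [&& sumn c != 0, zs c &
   all (fun d => ~~ [&& sumn d != 0, sumn d != sumn c & zs d]) (subvecs c)].

Definition ofc (d : seq nat) : seq 'Z_6 :=
  flatten [seq nseq (nth 0 d i) (inZp i : 'Z_6) | i <- iota 0 6].

Lemma cnt_ofc d : size d = 6 -> cnt (ofc d) = d.
Proof.
move=> hd; apply: vec_eq; rewrite ?size_cnt // => j hj.
rewrite nth_cnt // count_flatten -map_comp.
have -> : [seq (count (fun x : 'Z_6 => val x == j) \o (fun i => nseq (nth 0 d i) (inZp i : 'Z_6))) i | i <- iota 0 6]
   = [seq (val (inZp i : 'Z_6) == j) * nth 0 d i | i <- iota 0 6].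
  by apply: eq_map => i /=; rewrite count_nseq.
by do 6 (case: j hj => [|j] hj; first by rewrite /=; lia).
Qed.

Definition vsub (a b : seq nat) := [seq nth 0 a i - nth 0 b i | i <- iota 0 6].
Definition vadd (a b : seq nat) := [seq nth 0 a i + nth 0 b i | i <- iota 0 6].

Lemma nth_vsub a b i : i < 6 -> nth 0 (vsub a b) i = nth 0 a i - nth 0 b i.
Proof. by move=> hi; rewrite (nth_map 0) ?size_iota // nth_iota. Qed.
Lemma nth_vadd a b i : i < 6 -> nth 0 (vadd a b) i = nth 0 a i + nth 0 b i.
Proof. by move=> hi; rewrite (nth_map 0) ?size_iota // nth_iota. Qed.
Lemma size_vsub a b : size (vsub a b) = 6. Proof. by rewrite size_map size_iota. Qed.
Lemma size_vadd a b : size (vadd a b) = 6. Proof. by rewrite size_map size_iota. Qed.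

Lemma sigma_cat (s t : seq 'Z_6) : sigma (s ++ t) = (sigma s + sigma t)%R.
Proof. by rewrite /sigma big_cat. Qed.

Lemma sigma_perm (s t : seq 'Z_6) : perm_eq s t -> sigma s = sigma t.
Proof. by move=> h; rewrite /sigma (perm_big _ h). Qed.

Lemma atomP s : atom s <-> atomv (cnt s).
Proof.
split.
- case=> hne [hz hno]; apply/and3P; split.
  + by rewrite sumn_cnt size_eq0; apply/eqP.
  + by apply/zsP.
  apply/allP => d hd; apply/negP => /and3P[h1 h2 h3].
  have [hsd hle] := subvecs_props hd; rewrite size_cnt in hsd.
  apply: hno; exists (ofc d), (ofc (vsub (cnt s) d)).
  have hp : perm_eq s (ofc d ++ ofc (vsub (cnt s) d)).
    apply: cnt_perm; apply: vec_eq; rewrite ?size_cnt // => i hi.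
    rewrite cnt_cat !cnt_ofc ?size_vsub // nth_vsub //; have := hle i; lia.
  have hs1 : size (ofc d) = sumn d by rewrite -sumn_cnt cnt_ofc.
  have hsz := perm_size hp; rewrite size_cat hs1 -sumn_cnt in hsz.
  have z1 : zero_sum (ofc d) by apply/zsP; rewrite cnt_ofc.
  split; first by apply/eqP; rewrite -size_eq0 hs1.
  split; first by apply/eqP; rewrite -size_eq0; move: h1 h2; rewrite hsz; lia.
  split => //; split => //.
  move: hz; rewrite /zero_sum (sigma_perm hp) sigma_cat z1 GRing.add0r => ->.
  by [].
- case/and3P => h1 h2 /allP h3; split; first by apply/eqP; rewrite -size_eq0 -sumn_cnt.
  split; first by apply/zsP.
  case=> S1 [S2 [n1 [n2 [z1 [z2 hp]]]]].
  have hc := perm_cnt hp.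
  have hd : cnt S1 \in subvecs (cnt s).
    apply: mem_subvecs6; rewrite ?size_cnt // => i; rewrite hc cnt_cat; lia.
  have := h3 _ hd; rewrite !sumn_cnt (perm_size hp) size_cat.
  have -> : zs (cnt S1) by apply/zsP.
  have n1' : size S1 != 0 by rewrite size_eq0; apply/eqP.
  have n2' : size S2 != 0 by rewrite size_eq0; apply/eqP.
  have -> : size S1 != size S1 + size S2 by apply/eqP; lia.
  by rewrite n1'.
Qed.

Lemma atom_size (s : seq 'Z_6) : atom s -> size s <= 6.
Proof.
case=> hne [hz hno]; rewrite leqNgt; apply/negP => hs.
pose f := fun k : 'I_7 => sigma (take k s).
have : ~~ injectiveb f.
  apply/negP => /injectiveP inj; have := leq_card f inj; by rewrite !card_ord.
case/injectivePn => j [k] hjk e.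
have [a [b [hab [hb6 eab]]]] : exists a b, a < b /\ b <= 6 /\ sigma (take a s) = sigma (take b s).
  have hj := ltn_ord j; have hk := ltn_ord k.
  case: (ltngtP (val j) (val k)) => h.
  - by exists (val j), (val k); split => //; split => //; lia.
  - by exists (val k), (val j); split => //; split => //; lia.
  - by move: hjk; rewrite -val_eqE h eqxx.
set S1 := drop a (take b s).
set S2 := take a s ++ drop b s.
have htb : take b s = take a s ++ S1 by rewrite -{1}(cat_take_drop a (take b s)) take_takel // ltnW.
have hp : perm_eq s (S1 ++ S2).
  by rewrite -{1}(cat_take_drop b s) htb -catA /S2 perm_catCA.
have sz1 : size S1 = b - a by rewrite size_drop size_takel //; lia.
have hsz := perm_size hp; rewrite size_cat sz1 in hsz.
have z1 : sigma S1 = 0%R.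
  move: eab; rewrite htb sigma_cat => /eqP; rewrite -subr_eq0 => /eqP.
  by rewrite opprD addrA addrN add0r => /eqP; rewrite oppr_eq0 => /eqP.
apply: hno; exists S1, S2; split; first by move/(f_equal size); rewrite sz1 /=; lia.
split; first by move/(f_equal size) => h; change (size S2 = 0) in h; move: hs; rewrite hsz h; lia.
split; first by [].
split => //.
move: hz; rewrite /zero_sum (sigma_perm hp) sigma_cat z1 GRing.add0r.
by [].
Qed.

Fixpoint lens (n : nat) (c : seq nat) : seq nat :=
  if sumn c == 0 then [:: 0] else
  if n is n'.+1 then
    undup (flatten [seq map S (lens n' (vsub c d)) |
       d <- subvecs c & (0 < nth 0 d (find (fun x => x != 0) c)) && atomv d])
  else [::].

Lemma lensS n c : sumn c != 0 -> lens n.+1 c =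
    undup (flatten [seq map S (lens n (vsub c d)) |
       d <- subvecs c & (0 < nth 0 d (find (fun x => x != 0) c)) && atomv d]).
Proof. by move=> h; rewrite /= (negbTE h). Qed.

Lemma nil_factor (As : seq (seq 'Z_6)) :
  perm_eq [::] (flatten As) -> (forall A, A \in As -> atom A) -> As = [::].
Proof.
case: As => [//|A As] hp ha; exfalso.
have [hne _] := ha A (mem_head _ _).
move: (perm_size hp); rewrite /= size_cat => h.
by apply: hne; case: A {ha hp} h.
Qed.

Lemma has_nz (c : seq nat) : sumn c != 0 -> has (fun x => x != 0) c.
Proof. elim: c => [|x c IH] //=; case: (x =P 0) => [->|//] /=; exact: IH. Qed.

Lemma lens_sound n : forall (B : seq 'Z_6) As, size B <= n -> perm_eq B (flatten As) ->
  (forall A, A \in As -> atom A) -> size As \in lens n (cnt B).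
Proof.
elim: n => [|n IH] B As hn hp ha.
  have B0 : B = [::] by case: B hn hp.
  subst B; by rewrite (nil_factor hp ha).
case: (boolP (sumn (cnt B) == 0)) => hz.
  have B0 : B = [::] by apply/eqP; rewrite -size_eq0 -sumn_cnt.
  subst B; by rewrite (nil_factor hp ha) /=.
rewrite lensS //.
set i0 := find (fun x => x != 0) (cnt B).
have hhas := has_nz hz.
have hi0 : i0 < 6 by rewrite -(size_cnt B) -has_find.
have pos : 0 < nth 0 (cnt B) i0 by rewrite lt0n; apply: (nth_find 0 hhas).
rewrite nth_cnt // -has_count in pos.
case/hasP: pos => x xB /eqP xv.
have : x \in flatten As by rewrite -(perm_mem hp).
case/flattenP => A AAs xA.
have pA := perm_to_rem AAs.
set As' := rem A As.
have hp' : perm_eq B (A ++ flatten As') := perm_trans hp (perm_flatten pA).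
have atA := ha A AAs.
have hc : forall i, nth 0 (cnt B) i = nth 0 (cnt A) i + nth 0 (cnt (flatten As')) i.
  by move=> i; rewrite (perm_cnt hp') cnt_cat.
rewrite mem_undup; apply/flattenP.
exists (map S (lens n (vsub (cnt B) (cnt A)))).
  apply/mapP; exists (cnt A) => //.
  rewrite mem_filter; apply/andP; split; last first.
    apply: mem_subvecs6; rewrite ?size_cnt // => i; rewrite hc; lia.
  apply/andP; split; last by apply/atomP.
  by rewrite nth_cnt // -has_count; apply/hasP; exists x => //; rewrite xv.
have -> : vsub (cnt B) (cnt A) = cnt (flatten As').
  apply: vec_eq; rewrite ?size_vsub ?size_cnt // => i hi.
  by rewrite nth_vsub // hc addKn.
rewrite (perm_size pA) /= mem_map; last by move=> ? ? [].
apply: IH => //.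
- have := perm_size hp'; rewrite size_cat => e.
  have [hne _] := atA.
  have hA : 0 < size A by rewrite lt0n size_eq0; apply/eqP.
  have key : forall a b f : nat, b <= n.+1 -> b = a + f -> 0 < a -> f <= n by move=> *; lia.
  exact: key hn e hA.
- by move=> A' hA'; apply: ha; apply: (mem_rem hA').
Qed.

Fixpoint bvecs (k n : nat) : seq (seq nat) :=
  if n is n'.+1 then flatten [seq [seq x :: t | t <- bvecs (k - x) n'] | x <- iota 0 k.+1]
  else [:: [::]].

Lemma mem_bvecs n : forall k d, size d = n -> sumn d <= k -> d \in bvecs k n.
Proof.
elim: n => [|n IH] k [|x t] // [hs] hk.
change (x :: t \in flatten [seq [seq y :: u | u <- bvecs (k - y) n] | y <- iota 0 k.+1]).
rewrite /= in hk.
apply/flattenP; exists [seq x :: t' | t' <- bvecs (k - x) n].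
  by apply/mapP; exists x => //; rewrite mem_iota /= add0n ltnS; lia.
by apply: map_f; apply: IH => //; lia.
Qed.

Definition atomsL : seq (seq nat) := [seq d <- bvecs 6 6 | atomv d].

Definition okc (c : seq nat) : bool :=
  (5 \notin lens 12 c) || all (fun k => k \in [:: 2; 4; 5]) (lens 12 c).

Definition checkL : bool :=
  all (fun a => all (fun b => okc (vadd a b)) atomsL) atomsL.

Lemma checkL_ok : checkL.
Proof. by vm_compute. Qed.

Lemma mk_len (B : seq 'Z_6) As : perm_eq B (flatten As) ->
  all (fun A => atomv (cnt A)) As -> in_lengths B (size As).
Proof.
move=> hp /allP ha; exists As; split => //; split => // A hA; apply/atomP; exact: ha.
Qed.

Lemma sound12 (B : seq 'Z_6) k : size B <= 12 -> in_lengths B k -> k \in lens 12 (cnt B).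
Proof. by move=> hs [As [<- [ha hp]]]; apply: lens_sound. Qed.

Lemma main (B : seq 'Z_6) : in_lengths B 2 -> in_lengths B 5 ->
  forall k, in_lengths B k -> k \in [:: 2; 4; 5].
Proof.
move=> [As [hs [ha hp]]] h5 k hk.
case: As hs ha hp => [|A1 [|A2 [|? ?]]] //= _ ha hp.
have a1 : atom A1 by apply: ha; rewrite inE eqxx.
have a2 : atom A2 by apply: ha; rewrite !inE eqxx orbT.
rewrite cats0 in hp.
have hc : cnt B = vadd (cnt A1) (cnt A2).
  apply: vec_eq; rewrite ?size_cnt ?size_vadd // => i hi.
  by rewrite (perm_cnt hp) cnt_cat nth_vadd.
have hsz : size B <= 12.
  have key : forall a b c : nat, c = a + b -> a <= 6 -> b <= 6 -> c <= 12 by move=> *; lia.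
  by apply: key (atom_size a1) (atom_size a2); rewrite (perm_size hp) size_cat.
have m1 : cnt A1 \in atomsL.
  by rewrite mem_filter ((atomP _).1 a1) mem_bvecs ?size_cnt // sumn_cnt atom_size.
have m2 : cnt A2 \in atomsL.
  by rewrite mem_filter ((atomP _).1 a2) mem_bvecs ?size_cnt // sumn_cnt atom_size.
move: checkL_ok; rewrite /checkL => /allP /(_ _ m1) /allP /(_ _ m2).
rewrite -hc /okc => /orP[h|h].
- by move: h; rewrite (sound12 hsz h5).
- exact: (allP h _ (sound12 hsz hk)).
Qed.

Lemma L25 : @in_system_of_lengths 'Z_6 (fun k => k = 2%N \/ k = 5%N).
Proof.
exists (ofc [:: 0;4;1;0;0;6]); split; first by apply/zsP; rewrite cnt_ofc.
move=> k; split.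
- case=> ->.
  + apply: (@mk_len _ [:: ofc [::0;4;1;0;0;0]; ofc [::0;0;0;0;0;6]]); by vm_compute.
  + apply: (@mk_len _ [:: ofc [::0;1;0;0;0;1]; ofc [::0;1;0;0;0;1]; ofc [::0;1;0;0;0;1];
                          ofc [::0;1;0;0;0;1]; ofc [::0;0;1;0;0;2]]); by vm_compute.
- move=> h; have hs : size (ofc [:: 0;4;1;0;0;6]) <= 12 by vm_compute.
  have := sound12 hs h; rewrite cnt_ofc //.
  have -> : lens 12 [:: 0;4;1;0;0;6] = [:: 5; 2] by vm_compute.
  by rewrite !inE => /orP[] /eqP ->; auto.
Qed.

Lemma L245 : @in_system_of_lengths 'Z_6 (fun k => k = 2%N \/ k = 4%N \/ k = 5%N).
Proof.
exists (ofc [:: 0;4;1;0;1;4]); split; first by apply/zsP; rewrite cnt_ofc.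
move=> k; split.
- case=> [->|[->|->]].
  + apply: (@mk_len _ [:: ofc [::0;4;1;0;0;0]; ofc [::0;0;0;0;1;4]]); by vm_compute.
  + apply: (@mk_len _ [:: ofc [::0;1;0;0;0;1]; ofc [::0;1;0;0;0;1]; ofc [::0;2;0;0;1;0];
                          ofc [::0;0;1;0;0;2]]); by vm_compute.
  + apply: (@mk_len _ [:: ofc [::0;1;0;0;0;1]; ofc [::0;1;0;0;0;1]; ofc [::0;1;0;0;0;1];
                          ofc [::0;1;0;0;0;1]; ofc [::0;0;1;0;1;0]]); by vm_compute.
- move=> h; have hs : size (ofc [:: 0;4;1;0;1;4]) <= 12 by vm_compute.
  have := sound12 hs h; rewrite cnt_ofc //.
  have -> : lens 12 [:: 0;4;1;0;1;4] = [:: 5; 4; 2] by vm_compute.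
  by rewrite !inE => /or3P[] /eqP ->; auto.
Qed.

Theorem lemma3p1 :
  (forall L : nat -> Prop,
     @in_system_of_lengths 'Z_6 L -> L 2%N -> L 5%N ->
     (forall k, L k <-> (k = 2%N \/ k = 5%N)) \/
     (forall k, L k <-> (k = 2%N \/ k = 4%N \/ k = 5%N))) /\
  @in_system_of_lengths 'Z_6 (fun k => k = 2%N \/ k = 5%N) /\
  @in_system_of_lengths 'Z_6 (fun k => k = 2%N \/ k = 4%N \/ k = 5%N) /\
  ~ @in_system_of_lengths 'Z_6 (fun k => (2 <= k <= 5)%N).
Proof.
split; last split; [|exact: L25|split; [exact: L245|]].
- move=> L [B [zB hL]] L2 L5.
  have key := main ((hL 2).1 L2) ((hL 5).1 L5).
  case: (classic (L 4)) => h4; [right|left] => k; split.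
  + by move/(hL k)/key; rewrite !inE => /or3P[] /eqP ->; auto.
  + by case=> [->|[->|->]].
  + move=> Lk; have := key _ ((hL k).1 Lk); rewrite !inE => /or3P[] /eqP e; subst k; auto.
    by [].
  + by case=> ->.
- move=> [B [zB hL]].
  have := main ((hL 2).1 isT) ((hL 5).1 isT) ((hL 3).1 isT).
  by rewrite !inE.
Qed.
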